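(* Let $E: y^2=x^3+Ax+B$ ($A,B\in\mathbb{Z}$) be an elliptic curve over $\mathbb{Q}$. There exist constants $c_1,c_2$ depending only on $E$ such that for every squarefree positive integer $D$ and every point $P\ne O$ of $E_D(\mathbb{Q})$, where $E_D: y^2=x^3+D^2Ax+D^3B$, \[c_1-\log D\le \hat h(P)-h(P)\le c_2+\log D,\] and if in addition $x(P)>D$, then \[c_1-\log D\le \hat h(P)-h(P)\le c_2.\]
   Context: $h$ is the absolute logarithmic Weil height on $\overline{\mathbb{Q}}$; for a point $P$ on an elliptic curve in Weierstrass form, $h(P)=h(x(P))$ and $\hat h(P)=\lim_{n\to\infty} h(2^nP)/4^n$ (the canonical height, not normalized by the factor $1/2$). *)

(* Defs.v *)
From Stdlib Require Import Reals QArith ZArith.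
From Coquelicot Require Import Coquelicot.
Open Scope R_scope.

Definition heightQ (q : Q) : R :=
  let r := Qred q in
  ln (Rmax (IZR (Z.abs (Qnum r))) (IZR (Zpos (Qden r)))).

(* Points of a Weierstrass curve y^2 = x^3 + a x + b over Q:
   None is the point at infinity O, Some (x,y) an affine point. *)
Definition pt := option (Q * Q).

Definition on_curve (a b : Q) (P : pt) : Prop :=
  match P with
  | None => True
  | Some (x, y) => (y * y == x * x * x + a * x + b)%Q
  end.

Definition dbl (a : Q) (P : pt) : pt :=
  match P with
  | None => None
  | Some (x, y) =>
      if Qeq_bool y 0 then None
      else
        let l := (((3 # 1) * x * x + a) / ((2 # 1) * y))%Q in
        let x' := (l * l - (2 # 1) * x)%Q in
        Some (x', (l * (x - x') - y)%Q)
  end.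

Definition hpt (P : pt) : R :=
  match P with
  | None => 0
  | Some (x, _) => heightQ x
  end.

(* Canonical height (not normalized by 1/2): lim h(2^n P) / 4^n. *)
Definition canon_height (a : Q) (P : pt) : R :=
  real (Lim_seq (fun n => hpt (Nat.iter n (dbl a) P) / 4 ^ n)).

Definition squarefree (d : Z) : Prop :=
  forall k : Z, (k * k | d)%Z -> Z.abs k = 1%Z.

Definition x_coord_gt (P : pt) (d : Z) : Prop :=
  match P with
  | None => False
  | Some (x, _) => (inject_Z d < x)%Q
  end.

(* Main.v *)
Require Import Defs.
From Stdlib Require Import Reals QArith ZArith Qreals Znumtheory Lia Lra.
From Coquelicot Require Import Coquelicot.
Open Scope R_scope.


Lemma ggcd_pos_facts (p : Z) (q : positive) :
  let '(g, (aa, bb)) := Z.ggcd p (Zpos q) in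
  p = (g * aa)%Z /\ Zpos q = (g * bb)%Z /\ g = Z.gcd p (Zpos q) /\ (0 < g)%Z /\ (0 < bb)%Z.
Proof.
  pose proof (Z.ggcd_correct_divisors p (Zpos q)) as H.
  pose proof (Z.ggcd_gcd p (Zpos q)) as H2.
  destruct (Z.ggcd p (Zpos q)) as [g [aa bb]]. simpl in H2. destruct H as [H1 H3].
  assert (0 <= g)%Z by (rewrite H2; apply Z.gcd_nonneg).
  assert (g <> 0)%Z by (intro; subst; lia).
  repeat split; auto; try lia.
Qed.

Lemma heightQ_frac (p : Z) (q : positive) :
  heightQ (p # q) = ln (Rmax (IZR (Z.abs p)) (IZR (Zpos q)) / IZR (Z.gcd p (Zpos q))).
Proof.
  unfold heightQ, Qred.
  pose proof (ggcd_pos_facts p q) as H.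
  destruct (Z.ggcd p (Zpos q)) as [g [aa bb]]. destruct H as (H1 & H2 & H3 & H4 & H5).
  simpl. rewrite <- H3. rewrite Z2Pos.id by lia. rewrite H2, H1.
  rewrite Z.abs_mul, (Z.abs_eq g) by lia. rewrite !mult_IZR.
  rewrite RmaxRmult by (apply IZR_le; lia).
  f_equal. field. apply not_0_IZR; lia.
Qed.

Lemma Q2R_inject (z : Z) : Q2R (inject_Z z) = IZR z.
Proof. unfold Q2R, inject_Z. simpl. field. Qed.

Lemma heightQ_repr (x : Q) (p q : Z) : q <> 0%Z ->
  Q2R x = IZR p / IZR q ->
  heightQ x = ln (Rmax (IZR (Z.abs p)) (IZR (Z.abs q)) / IZR (Z.gcd p q)).
Proof.
  intros Hq Hx.
  destruct (Z_lt_le_dec 0 q) as [Hp|Hn].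
  - assert (E : x == p # Z.to_pos q).
    { apply eqR_Qeq. rewrite Hx. unfold Q2R. simpl. rewrite Z2Pos.id by lia. field.
      apply not_0_IZR; lia. }
    unfold heightQ. rewrite (Qred_complete _ _ E). fold (heightQ (p # Z.to_pos q)).
    rewrite heightQ_frac. rewrite Z2Pos.id by lia. rewrite (Z.abs_eq q) by lia. reflexivity.
  - assert (E : x == (- p) # Z.to_pos (- q)).
    { apply eqR_Qeq. rewrite Hx. unfold Q2R. simpl. rewrite Z2Pos.id by lia.
      rewrite !opp_IZR. field. apply not_0_IZR; lia. }
    unfold heightQ. rewrite (Qred_complete _ _ E). fold (heightQ ((-p) # Z.to_pos (-q))).
    rewrite heightQ_frac. rewrite Z2Pos.id by lia. rewrite Z.gcd_opp_l, Z.gcd_opp_r.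
    rewrite Z.abs_opp. rewrite (Z.abs_neq q) by lia. reflexivity.
Qed.

Lemma Qred_coprime (x : Q) : Z.gcd (Qnum (Qred x)) (Zpos (Qden (Qred x))) = 1%Z.
Proof.
  destruct x as [p q]. unfold Qred.
  pose proof (ggcd_pos_facts p q) as H.
  destruct (Z.ggcd p (Zpos q)) as [g [aa bb]]. destruct H as (H1 & H2 & H3 & H4 & H5).
  simpl. rewrite Z2Pos.id by lia.
  assert (E: Z.gcd p (Zpos q) = (g * Z.gcd aa bb)%Z).
  { rewrite H1, H2. rewrite Z.gcd_mul_mono_l. rewrite Z.abs_eq by lia. reflexivity. }
  rewrite <- H3 in E. nia.
Qed.

Lemma Qred_repr (x : Q) : Q2R x = IZR (Qnum (Qred x)) / IZR (Zpos (Qden (Qred x))).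
Proof. rewrite <- (Qeq_eqR _ _ (Qred_correct x)). reflexivity. Qed.

Lemma heightQ_red (x : Q) :
  heightQ x = ln (Rmax (IZR (Z.abs (Qnum (Qred x)))) (IZR (Zpos (Qden (Qred x))))).
Proof. reflexivity. Qed.

Lemma ln_bounds1 (T S g D : R) : 1 <= T -> T <= S -> S <= D * T -> 1 <= g -> g <= D ->
  ln T - ln D <= ln (S / g) <= ln T + ln D.
Proof.
  intros. assert (0 < D) by lra. assert (0 < S) by lra.
  assert (0 < S / g) by (apply Rdiv_lt_0_compat; lra).
  split.
  - rewrite <- ln_div by lra. apply ln_le. apply Rdiv_lt_0_compat; lra.
    apply Rle_trans with (S / D).
    + unfold Rdiv. apply Rmult_le_compat_r; [left; apply Rinv_0_lt_compat; lra| lra].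
    + unfold Rdiv. apply Rmult_le_compat_l; [lra|]. apply Rinv_le_contravar; lra.
  - rewrite Rplus_comm, <- ln_mult by lra. apply ln_le; auto.
    apply Rle_trans with S; auto.
    unfold Rdiv. rewrite <- (Rmult_1_r S) at 2. apply Rmult_le_compat_l; [lra|].
    rewrite <- Rinv_1. apply Rinv_le_contravar; lra.
Qed.

Lemma gcd_le_D (D m n : Z) : (0 < D)%Z -> (0 < n)%Z -> Z.gcd m n = 1%Z ->
  (1 <= Z.gcd (D * m) n <= D)%Z.
Proof.
  intros HD Hn Hc. set (g := Z.gcd (D*m) n).
  assert (0 <= g)%Z by apply Z.gcd_nonneg.
  assert (g <> 0)%Z. { intro E. apply Z.gcd_eq_0 in E. lia. }
  split; [lia|].
  apply Z.divide_pos_le; auto.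
  apply Gauss with m.
  - rewrite Z.mul_comm. apply Z.gcd_divide_l.
  - apply Zgcd_1_rel_prime.
    assert (Hd : (Z.gcd g m | 1)%Z).
    { rewrite <- Hc. apply Z.gcd_greatest.
      - apply Z.gcd_divide_r.
      - apply Z.divide_trans with g; [apply Z.gcd_divide_l | apply Z.gcd_divide_r]. }
    apply Z.divide_1_r_nonneg in Hd; auto. apply Z.gcd_nonneg.
Qed.

Lemma IZR_max_ge1 (m n : Z) : (0 < n)%Z -> 1 <= Rmax (IZR (Z.abs m)) (IZR n).
Proof. intros. apply Rle_trans with (IZR n); [apply IZR_le; lia | apply Rmax_r]. Qed.

Lemma scale_bound (x : Q) (D : Z) : (0 < D)%Z ->
  heightQ (x / inject_Z D) - ln (IZR D) <= heightQ x <= heightQ (x / inject_Z D) + ln (IZR D)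
  /\ ((inject_Z D < x)%Q -> heightQ (x / inject_Z D) <= heightQ x).
Proof.
  intros HD.
  set (u := (x / inject_Z D)%Q).
  set (m := Qnum (Qred u)). set (n := Zpos (Qden (Qred u))).
  assert (Hn : (0 < n)%Z) by (unfold n; lia).
  assert (Hc : Z.gcd m n = 1%Z) by apply Qred_coprime.
  assert (HDn : ~ inject_Z D == 0).
  { intro E. apply Qeq_eqR in E. rewrite Q2R_inject in E. rewrite RMicromega.Q2R_0 in E.
    apply eq_IZR in E. lia. }
  assert (Hu : Q2R u = IZR m / IZR n) by apply Qred_repr.
  assert (Hx : Q2R x = IZR (D * m) / IZR n).
  { unfold u in Hu. rewrite Q2R_div in Hu by auto. rewrite Q2R_inject in Hu.
    rewrite mult_IZR. assert (IZR D <> 0) by (apply not_0_IZR; lia).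
    assert (IZR n <> 0) by (apply not_0_IZR; lia).
    replace (Q2R x) with (Q2R x / IZR D * IZR D) by (field; auto).
    rewrite Hu. field; auto. }
  pose proof (heightQ_repr x (D*m) n ltac:(lia) Hx) as Hhx.
  assert (Hhu : heightQ u = ln (Rmax (IZR (Z.abs m)) (IZR n))) by reflexivity.
  fold u. rewrite Hhx, Hhu. rewrite (Z.abs_eq n) by lia.
  pose proof (gcd_le_D D m n HD Hn Hc) as [G1 G2].
  apply IZR_le in G1. apply IZR_le in G2.
  set (T := Rmax (IZR (Z.abs m)) (IZR n)).
  set (S := Rmax (IZR (Z.abs (D * m))) (IZR n)).
  assert (HT : 1 <= T) by (apply IZR_max_ge1; auto).
  assert (HDm : IZR (Z.abs (D * m)) = IZR D * IZR (Z.abs m)).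
  { rewrite Z.abs_mul, Z.abs_eq by lia. apply mult_IZR. }
  assert (HD1 : 1 <= IZR D) by (apply IZR_le; lia).
  assert (Ha0 : 0 <= IZR (Z.abs m)) by (apply IZR_le; lia).
  assert (Hn0 : 0 <= IZR n) by (apply IZR_le; lia).
  assert (TS : T <= S).
  { unfold T, S. rewrite HDm. apply Rmax_lub.
    - apply Rle_trans with (IZR D * IZR (Z.abs m)); [nra | apply Rmax_l].
    - apply Rmax_r. }
  assert (SD : S <= IZR D * T).
  { unfold T, S. rewrite HDm. apply Rmax_lub.
    - apply Rmult_le_compat_l; [lra | apply Rmax_l].
    - apply Rle_trans with (IZR D * IZR n); [nra|]. apply Rmult_le_compat_l; [lra | apply Rmax_r]. }
  split.
  - apply ln_bounds1; auto.
  - intro Hlt. apply Qlt_Rlt in Hlt. rewrite Q2R_inject, Hx in Hlt.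
    assert (Hmn : IZR n < IZR m).
    { assert (0 < IZR n) by (apply IZR_lt; lia).
      rewrite mult_IZR in Hlt. apply (Rmult_lt_compat_r (IZR n)) in Hlt; auto.
      field_simplify in Hlt; [|lra]. nra. }
    apply lt_IZR in Hmn.
    assert (ET : T = IZR m).
    { unfold T. rewrite Z.abs_eq by lia. apply Rmax_left. apply IZR_le; lia. }
    assert (ES : S = IZR D * IZR m).
    { unfold S. rewrite HDm. rewrite Z.abs_eq by lia. apply Rmax_left.
      apply Rle_trans with (IZR m). apply IZR_le; lia.
      assert (0 <= IZR m) by (apply IZR_le; lia). nra. }
    apply ln_le. lra. rewrite ET, ES.
    apply Rle_trans with (IZR D * IZR m / IZR D).
    + right. field. lra.
    + unfold Rdiv. apply Rmult_le_compat_l. assert (0 <= IZR m) by (apply IZR_le; lia). nra.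
      apply Rinv_le_contravar; lra.
Qed.

Lemma lim_geomK (K : R) : is_lim_seq (fun n => K / 4 ^ n) 0.
Proof.
  apply is_lim_seq_ext with (fun n => K * (/ 4) ^ n).
  - intro n. unfold Rdiv. rewrite pow_inv. reflexivity.
  - replace (Finite 0) with (Rbar_mult K 0) by (simpl; f_equal; ring).
    apply is_lim_seq_scal_l. apply is_lim_seq_geom. rewrite Rabs_pos_eq; lra.
Qed.

Lemma tate (h g : nat -> R) (C L : R) :
  (forall n, Rabs (g (S n) - 4 * g n) <= C) ->
  (forall n, Rabs (h n - g n) <= L) ->
  exists l, is_lim_seq (fun n => h n / 4 ^ n) l /\ g 0%nat - C / 3 <= l <= g 0%nat + C / 3.
Proof.
  intros Hg Hh.
  assert (HC : 0 <= C) by (specialize (Hg 0%nat); pose proof (Rabs_pos (g 1%nat - 4 * g 0%nat)); lra).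
  assert (HL : 0 <= L) by (specialize (Hh 0%nat); pose proof (Rabs_pos (h 0%nat - g 0%nat)); lra).
  set (w := fun n => g n / 4 ^ n - C / 3 / 4 ^ n).
  set (v := fun n => g n / 4 ^ n + C / 3 / 4 ^ n).
  assert (P4 : forall n, 0 < 4 ^ n) by (intro; apply pow_lt; lra).
  assert (Wg : forall n, w n <= w (S n)).
  { intro n. unfold w. specialize (Hg n). apply Rabs_le_between in Hg.
    simpl. pose proof (P4 n).
    assert (E: g (S n) / (4 * 4 ^ n) - C / 3 / (4 * 4 ^ n) - (g n / 4 ^ n - C / 3 / 4 ^ n)
      = (g (S n) - 4 * g n + C) / (4 * 4 ^ n)) by (field; lra).
    assert (0 <= (g (S n) - 4 * g n + C) / (4 * 4 ^ n)).
    { apply Rmult_le_pos; [lra | left; apply Rinv_0_lt_compat; lra]. }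
    lra. }
  assert (Vd : forall n, v (S n) <= v n).
  { intro n. unfold v. specialize (Hg n). apply Rabs_le_between in Hg.
    simpl. pose proof (P4 n).
    assert (E: g n / 4 ^ n + C / 3 / 4 ^ n - (g (S n) / (4 * 4 ^ n) + C / 3 / (4 * 4 ^ n))
      = (4 * g n - g (S n) + C) / (4 * 4 ^ n)) by (field; lra).
    assert (0 <= (4 * g n - g (S n) + C) / (4 * 4 ^ n)).
    { apply Rmult_le_pos; [lra | left; apply Rinv_0_lt_compat; lra]. }
    lra. }
  assert (WV : forall n, w n <= v n).
  { intro n. unfold w, v. pose proof (P4 n).
    assert (0 <= C / 3 / 4 ^ n) by (apply Rmult_le_pos; [lra| left; apply Rinv_0_lt_compat; lra]).
    lra. }
  assert (V0 : forall n, v n <= v 0%nat).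
  { induction n; [lra|]. specialize (Vd n). lra. }
  assert (W0 : forall n, w 0%nat <= w n).
  { induction n; [lra|]. specialize (Wg n). lra. }
  destruct (growing_cv w) as [l Hl].
  { intro n. apply Wg. }
  { exists (v 0%nat). intros y [i ->]. specialize (WV i). specialize (V0 i). lra. }
  apply is_lim_seq_Reals in Hl.
  exists l. split.
  - apply is_lim_seq_le_le with (fun n => w n - (L + C) / 4 ^ n) (fun n => w n + (L + C) / 4 ^ n).
    + intro n. specialize (Hh n). apply Rabs_le_between in Hh. unfold w. pose proof (P4 n).
      assert (E1: h n / 4 ^ n - (g n / 4 ^ n - C / 3 / 4 ^ n) = (h n - g n + C / 3) / 4 ^ n)
        by (field; lra).
      assert (B1 : (- (L + C)) / 4 ^ n <= (h n - g n + C / 3) / 4 ^ n).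
      { apply Rmult_le_compat_r; [left; apply Rinv_0_lt_compat; lra | lra]. }
      assert (B2 : (h n - g n + C / 3) / 4 ^ n <= (L + C) / 4 ^ n).
      { apply Rmult_le_compat_r; [left; apply Rinv_0_lt_compat; lra | lra]. }
      unfold Rdiv in *. rewrite Ropp_mult_distr_l_reverse in B1. lra.
    + replace (Finite l) with (Rbar_minus l 0) by (simpl; f_equal; ring).
      apply is_lim_seq_minus'; [exact Hl | apply lim_geomK].
    + replace (Finite l) with (Rbar_plus l 0) by (simpl; f_equal; ring).
      apply is_lim_seq_plus'; [exact Hl | apply lim_geomK].
  - split.
    + assert (H1 := is_lim_seq_le (fun _ => w 0%nat) w (w 0%nat) l W0 (is_lim_seq_const _) Hl).
      simpl in H1. unfold w in H1. simpl in H1. rewrite !Rdiv_1_r in H1. exact H1.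
    + assert (H1 := is_lim_seq_le w (fun _ => v 0%nat) l (v 0%nat) (fun n => Rle_trans _ _ _ (WV n) (V0 n)) Hl (is_lim_seq_const _)).
      simpl in H1. unfold v in H1. simpl in H1. rewrite !Rdiv_1_r in H1. exact H1.
Qed.

Lemma mono (c M N T : R) (i j : nat) : Rabs M <= T -> Rabs N <= T ->
  Rabs (c * M ^ i * N ^ j) <= Rabs c * T ^ (i + j).
Proof.
  intros HM HN. rewrite !Rabs_mult, <- !RPow_abs, pow_add, <- Rmult_assoc.
  assert (0 <= Rabs M) by apply Rabs_pos. assert (0 <= Rabs N) by apply Rabs_pos.
  apply Rmult_le_compat.
  - apply Rmult_le_pos; [apply Rabs_pos | apply pow_le; auto].
  - apply pow_le; auto.
  - apply Rmult_le_compat_l; [apply Rabs_pos|]. apply pow_incr; auto.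
  - apply pow_incr; auto.
Qed.

Definition P3 (c0 c1 c2 c3 M N : R) :=
  c0 * M ^ 3 * N ^ 0 + c1 * M ^ 2 * N ^ 1 + c2 * M ^ 1 * N ^ 2 + c3 * M ^ 0 * N ^ 3.
Definition P4 (c0 c1 c2 c3 c4 M N : R) :=
  c0 * M ^ 4 * N ^ 0 + c1 * M ^ 3 * N ^ 1 + c2 * M ^ 2 * N ^ 2 + c3 * M ^ 1 * N ^ 3
  + c4 * M ^ 0 * N ^ 4.

Lemma bound3 c0 c1 c2 c3 M N T : Rabs M <= T -> Rabs N <= T ->
  Rabs (P3 c0 c1 c2 c3 M N) <= (Rabs c0 + Rabs c1 + Rabs c2 + Rabs c3) * T ^ 3.
Proof.
  intros HM HN. unfold P3.
  pose proof (mono c0 M N T 3 0 HM HN). pose proof (mono c1 M N T 2 1 HM HN).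
  pose proof (mono c2 M N T 1 2 HM HN). pose proof (mono c3 M N T 0 3 HM HN).
  simpl Nat.add in *.
  pose proof (Rabs_triang (c0 * M ^ 3 * N ^ 0 + c1 * M ^ 2 * N ^ 1 + c2 * M ^ 1 * N ^ 2) (c3 * M ^ 0 * N ^ 3)).
  pose proof (Rabs_triang (c0 * M ^ 3 * N ^ 0 + c1 * M ^ 2 * N ^ 1) (c2 * M ^ 1 * N ^ 2)).
  pose proof (Rabs_triang (c0 * M ^ 3 * N ^ 0) (c1 * M ^ 2 * N ^ 1)).
  lra.
Qed.

Lemma bound4 c0 c1 c2 c3 c4 M N T : Rabs M <= T -> Rabs N <= T ->
  Rabs (P4 c0 c1 c2 c3 c4 M N) <= (Rabs c0 + Rabs c1 + Rabs c2 + Rabs c3 + Rabs c4) * T ^ 4.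
Proof.
  intros HM HN. unfold P4.
  pose proof (mono c0 M N T 4 0 HM HN). pose proof (mono c1 M N T 3 1 HM HN).
  pose proof (mono c2 M N T 2 2 HM HN). pose proof (mono c3 M N T 1 3 HM HN).
  pose proof (mono c4 M N T 0 4 HM HN).
  simpl Nat.add in *.
  pose proof (Rabs_triang (c0 * M ^ 4 * N ^ 0 + c1 * M ^ 3 * N ^ 1 + c2 * M ^ 2 * N ^ 2 + c3 * M ^ 1 * N ^ 3) (c4 * M ^ 0 * N ^ 4)).
  pose proof (Rabs_triang (c0 * M ^ 4 * N ^ 0 + c1 * M ^ 3 * N ^ 1 + c2 * M ^ 2 * N ^ 2) (c3 * M ^ 1 * N ^ 3)).
  pose proof (Rabs_triang (c0 * M ^ 4 * N ^ 0 + c1 * M ^ 3 * N ^ 1) (c2 * M ^ 2 * N ^ 2)).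
  pose proof (Rabs_triang (c0 * M ^ 4 * N ^ 0) (c1 * M ^ 3 * N ^ 1)).
  lra.
Qed.

Section Dbl.
Variables A B : Z.
Let a := IZR A.
Let b := IZR B.
Definition FR M N := P4 1 0 (-2 * a) (-8 * b) (a ^ 2) M N.
Definition GR M N := P4 0 4 0 (4 * a) (4 * b) M N.
Definition f1R M N := P3 0 12 0 (16 * a) M N.
Definition g1R M N := P3 3 0 (-5 * a) (-27 * b) M N.
Definition f2R M N := P3 (4 * (4 * a ^ 3 + 27 * b ^ 2)) (- 4 * a ^ 2 * b)
   (4 * a * (3 * a ^ 3 + 22 * b ^ 2)) (12 * b * (a ^ 3 + 8 * b ^ 2)) M N.
Definition g2R M N := P3 (a ^ 2 * b) (a * (5 * a ^ 3 + 32 * b ^ 2))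
   (2 * b * (13 * a ^ 3 + 96 * b ^ 2)) (- 3 * a ^ 2 * (a ^ 3 + 8 * b ^ 2)) M N.
Definition DeltaR := 4 * (4 * a ^ 3 + 27 * b ^ 2).

Lemma ident1 M N : f1R M N * FR M N - g1R M N * GR M N = DeltaR * N ^ 7.
Proof. unfold f1R, g1R, FR, GR, DeltaR, P3, P4. ring. Qed.
Lemma ident2 M N : f2R M N * FR M N + g2R M N * GR M N = DeltaR * M ^ 7.
Proof. unfold f2R, g2R, FR, GR, DeltaR, P3, P4. ring. Qed.

Definition K2 := 1 + (1 + 0 + Rabs (-2 * a) + Rabs (-8 * b) + Rabs (a ^ 2))
                   + (0 + 4 + 0 + Rabs (4 * a) + Rabs (4 * b)).
Definition Kc := (0 + 12 + 0 + Rabs (16 * a)) + (3 + 0 + Rabs (-5 * a) + Rabs (-27 * b))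
  + (Rabs (4 * (4 * a ^ 3 + 27 * b ^ 2)) + Rabs (- 4 * a ^ 2 * b)
   + Rabs (4 * a * (3 * a ^ 3 + 22 * b ^ 2)) + Rabs (12 * b * (a ^ 3 + 8 * b ^ 2)))
  + (Rabs (a ^ 2 * b) + Rabs (a * (5 * a ^ 3 + 32 * b ^ 2))
   + Rabs (2 * b * (13 * a ^ 3 + 96 * b ^ 2)) + Rabs (- 3 * a ^ 2 * (a ^ 3 + 8 * b ^ 2))).
Definition K1 := 1 + Kc.

Lemma Kc_ge0 : 0 <= Kc.
Proof. unfold Kc. repeat match goal with |- context [Rabs ?x] => pose proof (Rabs_pos x); generalize dependent (Rabs x) end. intros. lra. Qed.

Lemma K2_ge1 : 1 <= K2.
Proof. unfold K2. repeat match goal with |- context [Rabs ?x] => pose proof (Rabs_pos x); generalize dependent (Rabs x) end. intros. lra. Qed.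

Lemma K1_ge1 : 1 <= K1.
Proof. unfold K1. pose proof Kc_ge0. lra. Qed.

Lemma upper_R M N T : Rabs M <= T -> Rabs N <= T ->
  Rmax (Rabs (FR M N)) (Rabs (GR M N)) <= K2 * T ^ 4.
Proof.
  intros HM HN.
  pose proof (bound4 1 0 (-2 * a) (-8 * b) (a ^ 2) M N T HM HN).
  pose proof (bound4 0 4 0 (4 * a) (4 * b) M N T HM HN).
  fold (FR M N) in H. fold (GR M N) in H0.
  rewrite Rabs_R1, Rabs_R0 in *. rewrite (Rabs_pos_eq 4) in H0 by lra.
  assert (0 <= T) by (pose proof (Rabs_pos M); lra).
  assert (0 <= T ^ 4) by (apply pow_le; auto).
  unfold K2.
  set (X := (1 + 0 + Rabs (-2 * a) + Rabs (-8 * b) + Rabs (a ^ 2))) in *.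
  set (Y := (0 + 4 + 0 + Rabs (4 * a) + Rabs (4 * b))) in *.
  assert (0 <= X) by (unfold X; pose proof (Rabs_pos (-2*a)); pose proof (Rabs_pos (-8*b)); pose proof (Rabs_pos (a^2)); lra).
  assert (0 <= Y) by (unfold Y; pose proof (Rabs_pos (4*a)); pose proof (Rabs_pos (4*b)); lra).
  apply Rmax_lub; nra.
Qed.

Lemma lower_R M N T : Rabs M <= T -> Rabs N <= T -> (T = Rabs M \/ T = Rabs N) ->
  Rabs DeltaR * T ^ 7 <= Kc * T ^ 3 * Rmax (Rabs (FR M N)) (Rabs (GR M N)).
Proof.
  intros HM HN HT.
  set (Mx := Rmax (Rabs (FR M N)) (Rabs (GR M N))).
  assert (HF : Rabs (FR M N) <= Mx) by apply Rmax_l.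
  assert (HG : Rabs (GR M N) <= Mx) by apply Rmax_r.
  assert (0 <= Mx) by (pose proof (Rabs_pos (FR M N)); lra).
  assert (0 <= T) by (pose proof (Rabs_pos M); lra).
  assert (T3 : 0 <= T ^ 3) by (apply pow_le; auto).
  pose proof (bound3 0 12 0 (16 * a) M N T HM HN) as B1.
  pose proof (bound3 3 0 (-5 * a) (-27 * b) M N T HM HN) as B2.
  pose proof (bound3 (4 * (4 * a ^ 3 + 27 * b ^ 2)) (- 4 * a ^ 2 * b)
   (4 * a * (3 * a ^ 3 + 22 * b ^ 2)) (12 * b * (a ^ 3 + 8 * b ^ 2)) M N T HM HN) as B3.
  pose proof (bound3 (a ^ 2 * b) (a * (5 * a ^ 3 + 32 * b ^ 2))
   (2 * b * (13 * a ^ 3 + 96 * b ^ 2)) (- 3 * a ^ 2 * (a ^ 3 + 8 * b ^ 2)) M N T HM HN) as B4.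
  fold (f1R M N) in B1. fold (g1R M N) in B2. fold (f2R M N) in B3. fold (g2R M N) in B4.
  rewrite Rabs_R0 in B1, B2. rewrite (Rabs_pos_eq 12) in B1 by lra.
  rewrite (Rabs_pos_eq 3) in B2 by lra.
  set (k1 := (0 + 12 + 0 + Rabs (16 * a))) in *.
  set (k2 := (3 + 0 + Rabs (-5 * a) + Rabs (-27 * b))) in *.
  set (k3 := (Rabs (4 * (4 * a ^ 3 + 27 * b ^ 2)) + Rabs (- 4 * a ^ 2 * b)
   + Rabs (4 * a * (3 * a ^ 3 + 22 * b ^ 2)) + Rabs (12 * b * (a ^ 3 + 8 * b ^ 2)))) in *.
  set (k4 := (Rabs (a ^ 2 * b) + Rabs (a * (5 * a ^ 3 + 32 * b ^ 2))
   + Rabs (2 * b * (13 * a ^ 3 + 96 * b ^ 2)) + Rabs (- 3 * a ^ 2 * (a ^ 3 + 8 * b ^ 2)))) in *.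
  assert (Kc = k1 + k2 + k3 + k4) by reflexivity.
  assert (0 <= k1) by (unfold k1; pose proof (Rabs_pos (16*a)); lra).
  assert (0 <= k2) by (unfold k2; pose proof (Rabs_pos (-5*a)); pose proof (Rabs_pos (-27*b)); lra).
  assert (0 <= k3) by (unfold k3; repeat match goal with |- context [Rabs ?x] => pose proof (Rabs_pos x); generalize dependent (Rabs x) end; intros; lra).
  assert (0 <= k4) by (unfold k4; repeat match goal with |- context [Rabs ?x] => pose proof (Rabs_pos x); generalize dependent (Rabs x) end; intros; lra).
  assert (E1 : Rabs DeltaR * Rabs N ^ 7 <= (k1 + k2) * T ^ 3 * Mx).
  { rewrite RPow_abs, <- Rabs_mult, <- (ident1 M N).
    eapply Rle_trans; [apply Rabs_triang|]. rewrite Rabs_Ropp, !Rabs_mult.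
    pose proof (Rabs_pos (f1R M N)). pose proof (Rabs_pos (g1R M N)).
    pose proof (Rabs_pos (FR M N)). pose proof (Rabs_pos (GR M N)).
    assert (Rabs (f1R M N) * Rabs (FR M N) <= (k1 * T ^ 3) * Mx) by (apply Rmult_le_compat; auto).
    assert (Rabs (g1R M N) * Rabs (GR M N) <= (k2 * T ^ 3) * Mx) by (apply Rmult_le_compat; auto).
    lra. }
  assert (E2 : Rabs DeltaR * Rabs M ^ 7 <= (k3 + k4) * T ^ 3 * Mx).
  { rewrite RPow_abs, <- Rabs_mult, <- (ident2 M N).
    eapply Rle_trans; [apply Rabs_triang|]. rewrite !Rabs_mult.
    pose proof (Rabs_pos (f2R M N)). pose proof (Rabs_pos (g2R M N)).
    pose proof (Rabs_pos (FR M N)). pose proof (Rabs_pos (GR M N)).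
    assert (Rabs (f2R M N) * Rabs (FR M N) <= (k3 * T ^ 3) * Mx) by (apply Rmult_le_compat; auto).
    assert (Rabs (g2R M N) * Rabs (GR M N) <= (k4 * T ^ 3) * Mx) by (apply Rmult_le_compat; auto).
    lra. }
  assert (0 <= T ^ 3 * Mx) by (apply Rmult_le_pos; auto).
  destruct HT as [-> | ->]; nra.
Qed.

End Dbl.

Lemma rp7 (a b : Z) : rel_prime a b -> rel_prime b (a*a*a*a*a*a*a).
Proof.
  intro H. apply rel_prime_sym in H.
  repeat apply rel_prime_mult; auto.
Qed.

Definition FZ (A B m n : Z) : Z :=
  (m*m*m*m - 2*A*m*m*n*n - 8*B*m*n*n*n + A*A*n*n*n*n)%Z.
Definition GZ (A B m n : Z) : Z :=
  (4*m*m*m*n + 4*A*m*n*n*n + 4*B*n*n*n*n)%Z.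

Lemma gcd_div_delta (A B m n : Z) : Z.gcd m n = 1%Z ->
  (Z.gcd (FZ A B m n) (GZ A B m n) | 4 * (4*A*A*A + 27*B*B))%Z.
Proof.
  intro Hc. set (g := Z.gcd (FZ A B m n) (GZ A B m n)).
  set (Dz := (4 * (4*A*A*A + 27*B*B))%Z).
  assert (HF : (g | FZ A B m n)%Z) by apply Z.gcd_divide_l.
  assert (HG : (g | GZ A B m n)%Z) by apply Z.gcd_divide_r.
  assert (I1 : (Dz * (n*n*n*n*n*n*n) =
     (12*m*m*n + 16*A*n*n*n) * FZ A B m n - (3*m*m*m - 5*A*m*n*n - 27*B*n*n*n) * GZ A B m n)%Z)
    by (unfold Dz, FZ, GZ; ring).
  assert (I2 : (Dz * (m*m*m*m*m*m*m) =
     (4*(4*A*A*A+27*B*B)*m*m*m - 4*A*A*B*m*m*n + 4*A*(3*A*A*A+22*B*B)*m*n*n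
        + 12*B*(A*A*A+8*B*B)*n*n*n) * FZ A B m n
     + (A*A*B*m*m*m + A*(5*A*A*A+32*B*B)*m*m*n + 2*B*(13*A*A*A+96*B*B)*m*n*n
        - 3*A*A*(A*A*A+8*B*B)*n*n*n) * GZ A B m n)%Z)
    by (unfold Dz, FZ, GZ; ring).
  assert (D1 : (g | Dz * (n*n*n*n*n*n*n))%Z).
  { rewrite I1. apply Z.divide_sub_r; apply Z.divide_mul_r; auto. }
  assert (D2 : (g | Dz * (m*m*m*m*m*m*m))%Z).
  { rewrite I2. apply Z.divide_add_r; apply Z.divide_mul_r; auto. }
  assert (Hr : rel_prime (n*n*n*n*n*n*n) (m*m*m*m*m*m*m)).
  { apply (rp7 m). apply (rp7 n m). apply rel_prime_sym. apply Zgcd_1_rel_prime. auto. }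
  apply rel_prime_bezout in Hr. destruct Hr as [u v Huv].
  replace Dz with (u * (Dz * (n*n*n*n*n*n*n)) + v * (Dz * (m*m*m*m*m*m*m)))%Z.
  - apply Z.divide_add_r; apply Z.divide_mul_r; auto.
  - transitivity (Dz * (u * (n*n*n*n*n*n*n) + v * (m*m*m*m*m*m*m)))%Z; [ring|]. rewrite Huv. ring.
Qed.

Lemma IZR_FZ A B m n : IZR (FZ A B m n) = FR A B (IZR m) (IZR n).
Proof. unfold FZ, FR, P4. rewrite ?plus_IZR, ?minus_IZR, ?mult_IZR. ring. Qed.
Lemma IZR_GZ A B m n : IZR (GZ A B m n) = GR A B (IZR m) (IZR n).
Proof. unfold GZ, GR, P4. rewrite ?plus_IZR, ?minus_IZR, ?mult_IZR. ring. Qed.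

Lemma dbl_height (A B m n : Z) :
  (4 * A ^ 3 + 27 * B ^ 2 <> 0)%Z -> (0 < n)%Z -> Z.gcd m n = 1%Z ->
  GZ A B m n <> 0%Z ->
  let T := Rmax (IZR (Z.abs m)) (IZR n) in
  4 * ln T - ln (K1 A B) <=
  ln (Rmax (IZR (Z.abs (FZ A B m n))) (IZR (Z.abs (GZ A B m n))) / IZR (Z.gcd (FZ A B m n) (GZ A B m n)))
  <= 4 * ln T + ln (K2 A B).
Proof.
  intros HD Hn Hc HG T.
  set (g := Z.gcd (FZ A B m n) (GZ A B m n)).
  set (Dz := (4 * (4*A*A*A + 27*B*B))%Z).
  assert (Dz0 : Dz <> 0%Z) by (unfold Dz; intro; apply HD; simpl Z.pow; lia).
  assert (g0 : (0 < g)%Z).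
  { assert (0 <= g)%Z by apply Z.gcd_nonneg. assert (g <> 0)%Z; [|lia].
    intro E. apply Z.gcd_eq_0 in E. lia. }
  assert (gD : (g <= Z.abs Dz)%Z).
  { apply Z.divide_pos_le; [lia|]. apply Z.divide_abs_r. apply gcd_div_delta; auto. }
  assert (DR : IZR Dz = DeltaR A B) by (unfold Dz, DeltaR; repeat rewrite ?plus_IZR, ?mult_IZR; ring).
  set (M := IZR m). set (N := IZR n).
  assert (HM : Rabs M <= T) by (unfold M, T; rewrite <- abs_IZR; apply Rmax_l).
  assert (HN : Rabs N <= T).
  { unfold N, T. rewrite Rabs_pos_eq by (apply IZR_le; lia). apply Rmax_r. }
  assert (HT : T = Rabs M \/ T = Rabs N).
  { unfold T, M, N. rewrite <- abs_IZR. rewrite (Rabs_pos_eq (IZR n)) by (apply IZR_le; lia).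
    unfold Rmax. destruct (Rle_dec _ _); auto. }
  assert (T1 : 1 <= T) by (apply Rle_trans with N; [apply IZR_le; lia | pose proof (Rle_abs N); lra]).
  set (Mx := Rmax (IZR (Z.abs (FZ A B m n))) (IZR (Z.abs (GZ A B m n)))).
  assert (EMx : Mx = Rmax (Rabs (FR A B M N)) (Rabs (GR A B M N))).
  { unfold Mx. rewrite !abs_IZR, IZR_FZ, IZR_GZ. reflexivity. }
  assert (Mx1 : 1 <= Mx).
  { unfold Mx. apply Rle_trans with (IZR (Z.abs (GZ A B m n))); [apply IZR_le; lia| apply Rmax_r]. }
  assert (g1 : 1 <= IZR g) by (apply IZR_le; lia).
  assert (gDR : IZR g <= Rabs (DeltaR A B)) by (rewrite <- DR, <- abs_IZR; apply IZR_le; auto).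
  pose proof (upper_R A B M N T HM HN) as U. rewrite <- EMx in U.
  pose proof (lower_R A B M N T HM HN HT) as L. rewrite <- EMx in L.
  pose proof (K1_ge1 A B) as HK1. pose proof (K2_ge1 A B) as HK2.
  assert (HKc : Kc A B <= K1 A B) by (unfold K1; lra).
  assert (T3 : 0 < T ^ 3) by (apply pow_lt; lra).
  assert (T4 : 0 < T ^ 4) by (apply pow_lt; lra).
  assert (L2 : Rabs (DeltaR A B) * T ^ 4 <= K1 A B * Mx).
  { replace (T ^ 7) with (T ^ 4 * T ^ 3) in L by ring.
    apply (Rmult_le_reg_r (T ^ 3)); auto.
    assert (Kc A B * Mx <= K1 A B * Mx) by (apply Rmult_le_compat_r; lra). nra. }
  assert (Mg : 0 < Mx / IZR g) by (apply Rdiv_lt_0_compat; lra).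
  assert (E4 : 4 * ln T = ln (T ^ 4)) by (rewrite ln_pow by lra; simpl; ring).
  split.
  - rewrite E4, <- ln_div by lra. apply ln_le. apply Rdiv_lt_0_compat; lra.
    replace (T ^ 4 / K1 A B) with ((T ^ 4 * IZR g) / K1 A B * / IZR g) by (field; lra).
    unfold Rdiv. rewrite (Rmult_comm Mx). rewrite (Rmult_comm (T ^ 4 * IZR g * / K1 A B)).
    apply Rmult_le_compat_l; [left; apply Rinv_0_lt_compat; lra|].
    apply Rle_trans with (K1 A B * Mx * / K1 A B).
    + apply Rmult_le_compat_r; [left; apply Rinv_0_lt_compat; lra|].
      assert (T ^ 4 * IZR g <= T ^ 4 * Rabs (DeltaR A B)) by (apply Rmult_le_compat_l; lra). nra.
    + right. field. lra.
  - rewrite E4, Rplus_comm, <- ln_mult by lra. apply ln_le; auto.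
    apply Rle_trans with Mx; [|nra].
    unfold Rdiv. rewrite <- (Rmult_1_r Mx) at 2. apply Rmult_le_compat_l; [lra|].
    rewrite <- Rinv_1. apply Rinv_le_contravar; lra.
Qed.

Lemma Q2R_31 : Q2R (3#1) = 3. Proof. unfold Q2R; simpl. lra. Qed.
Lemma Q2R_21 : Q2R (2#1) = 2. Proof. unfold Q2R; simpl. lra. Qed.

Lemma dbl_curve_R X Y a b : Y <> 0 -> Y * Y = X * X * X + a * X + b ->
  forall l, l = (3 * X * X + a) / (2 * Y) ->
  (l * (X - (l * l - 2 * X)) - Y) * (l * (X - (l * l - 2 * X)) - Y)
  = (l * l - 2 * X) * (l * l - 2 * X) * (l * l - 2 * X) + a * (l * l - 2 * X) + b.
Proof.
  intros HY HC l Hl.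
  assert (Ha : a = 2 * l * Y - 3 * X * X) by (rewrite Hl; field; auto).
  assert (Hb : b = Y * Y - X * X * X - a * X) by lra.
  rewrite Hb. rewrite Ha. ring.
Qed.

Lemma dbl_on_curve (a b : Q) (P : pt) : on_curve a b P -> on_curve a b (dbl a P).
Proof.
  destruct P as [[x y]|]; simpl; auto. intro HC.
  destruct (Qeq_bool y 0) eqn:E; simpl; auto.
  apply Qeq_bool_neq in E.
  assert (E2 : ~ (2 # 1) * y == 0).
  { intro H. apply E. apply Qeq_eqR in H. apply eqR_Qeq. rewrite Q2R_mult, Q2R_21 in H.
    rewrite RMicromega.Q2R_0 in *. lra. }
  assert (HY : Q2R y <> 0). { intro H. apply E. apply eqR_Qeq. rewrite RMicromega.Q2R_0. auto. }
  apply Qeq_eqR in HC. rewrite ?Q2R_plus, ?Q2R_mult in HC.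
  apply eqR_Qeq.
  set (l := (((3 # 1) * x * x + a) / ((2 # 1) * y))%Q).
  assert (Hl : Q2R l = (3 * Q2R x * Q2R x + Q2R a) / (2 * Q2R y)).
  { unfold l. rewrite Q2R_div by auto. rewrite ?Q2R_plus, ?Q2R_mult, Q2R_31, Q2R_21. reflexivity. }
  rewrite ?Q2R_plus, ?Q2R_mult, ?Q2R_minus, ?Q2R_mult, ?Q2R_minus, ?Q2R_mult, Q2R_21.
  apply dbl_curve_R; auto.
Qed.

Lemma xdbl_R (A B : Z) X Y aR bR DR M N :
  DR <> 0 -> N <> 0 -> Y <> 0 -> aR = DR ^ 2 * IZR A -> bR = DR ^ 3 * IZR B ->
  X = DR * M / N -> Y * Y = X * X * X + aR * X + bR ->
  ((3 * X * X + aR) / (2 * Y) * ((3 * X * X + aR) / (2 * Y)) - 2 * X) / DR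
    = FR A B M N / GR A B M N /\ GR A B M N <> 0.
Proof.
  intros HD HN HY Ha Hb HX HC.
  assert (HM : M = X * N / DR) by (rewrite HX; field; auto).
  assert (EG : GR A B M N = 4 * N ^ 4 * (Y * Y) / DR ^ 3).
  { rewrite HC, Ha, Hb, HM. unfold GR, P4. field; auto. }
  assert (EF : FR A B M N = N ^ 4 * (X ^ 4 - 2 * aR * X ^ 2 - 8 * bR * X + aR ^ 2) / DR ^ 4).
  { rewrite Ha, Hb, HM. unfold FR, P4. field; auto. }
  assert (YY : Y * Y <> 0) by (apply Rmult_integral_contrapositive; auto).
  split.
  - replace (((3 * X * X + aR) / (2 * Y) * ((3 * X * X + aR) / (2 * Y)) - 2 * X) / DR)
      with (((3 * X * X + aR) ^ 2 - 8 * X * (Y * Y)) / (4 * (Y * Y) * DR)) by (field; auto).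
    rewrite EF, EG.
    replace (N ^ 4 * (X ^ 4 - 2 * aR * X ^ 2 - 8 * bR * X + aR ^ 2) / DR ^ 4 / (4 * N ^ 4 * (Y * Y) / DR ^ 3))
      with ((X ^ 4 - 2 * aR * X ^ 2 - 8 * bR * X + aR ^ 2) / (4 * (Y * Y) * DR)) by (field; auto).
    f_equal. rewrite HC. ring.
  - rewrite EG. unfold Rdiv.
    assert (N ^ 4 <> 0) by (apply pow_nonzero; auto).
    assert (/ DR ^ 3 <> 0) by (apply Rinv_neq_0_compat; apply pow_nonzero; auto).
    repeat apply Rmult_integral_contrapositive_currified; auto; lra.
Qed.

Lemma root_R (A B : Z) X aR bR DR M N :
  DR <> 0 -> N <> 0 -> aR = DR ^ 2 * IZR A -> bR = DR ^ 3 * IZR B ->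
  X = DR * M / N -> X * X * X + aR * X + bR = 0 ->
  M * M * M + IZR A * M * N * N + IZR B * N * N * N = 0.
Proof.
  intros HD HN Ha Hb HX HC.
  assert (E : X * X * X + aR * X + bR = DR ^ 3 / N ^ 3 * (M * M * M + IZR A * M * N * N + IZR B * N * N * N))
    by (rewrite HX, Ha, Hb; field; auto).
  rewrite HC in E. symmetry in E. apply Rmult_integral in E. destruct E as [E|E]; auto.
  exfalso. unfold Rdiv in E. apply Rmult_integral in E. destruct E as [E|E].
  - apply (pow_nonzero DR 3); auto.
  - apply (Rinv_neq_0_compat (N ^ 3)); auto. apply pow_nonzero; auto.
Qed.

Lemma root_Z (A B m n : Z) : (0 < n)%Z -> Z.gcd m n = 1%Z ->
  (m*m*m + A*m*n*n + B*n*n*n = 0)%Z -> n = 1%Z /\ (Z.abs m <= 1 + Z.abs A + Z.abs B)%Z.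
Proof.
  intros Hn Hc H.
  assert (Hr : rel_prime n m) by (apply rel_prime_sym; apply Zgcd_1_rel_prime; auto).
  assert (D1 : (n | m * (m * m))%Z).
  { exists (- (A*m*n + B*n*n))%Z. lia. }
  apply Gauss in D1; auto. apply Gauss in D1; auto.
  assert (D2 : (n | 1)%Z) by (rewrite <- Hc; apply Z.gcd_greatest; auto; apply Z.divide_refl).
  apply Z.divide_1_r_nonneg in D2; [|lia]. subst n.
  split; auto.
  assert (H' : (m*m*m + A*m + B = 0)%Z) by lia.
  destruct (Z_le_gt_dec (Z.abs m) 1). lia.
  assert (m*m*Z.abs m <= Z.abs A * Z.abs m + Z.abs B)%Z by nia. nia.
Qed.

Definition gpt (D : Z) (P : pt) : R :=
  match P with None => 0 | Some (x, _) => heightQ (x / inject_Z D) end.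

Definition Cst (A B : Z) : R :=
  ln (K1 A B) + ln (K2 A B) + 4 * ln (IZR (1 + Z.abs A + Z.abs B)).

Lemma Cst_parts A B : 0 <= ln (K1 A B) /\ 0 <= ln (K2 A B) /\ 0 <= ln (IZR (1 + Z.abs A + Z.abs B)).
Proof.
  repeat split; rewrite <- ln_1; apply ln_le; try lra.
  apply K1_ge1. apply K2_ge1. apply IZR_le; lia.
Qed.

Lemma inject_ne0 (D : Z) : (0 < D)%Z -> ~ inject_Z D == 0.
Proof.
  intros HD E. apply Qeq_eqR in E. rewrite Q2R_inject in E. rewrite RMicromega.Q2R_0 in E.
  apply eq_IZR in E. lia.
Qed.

Lemma u_repr (x : Q) (D : Z) : (0 < D)%Z ->
  Q2R x = IZR D * IZR (Qnum (Qred (x / inject_Z D))) / IZR (Zpos (Qden (Qred (x / inject_Z D)))).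
Proof.
  intros HD. pose proof (Qred_repr (x / inject_Z D)) as Hu.
  rewrite Q2R_div in Hu by (apply inject_ne0; auto). rewrite Q2R_inject in Hu.
  assert (IZR D <> 0) by (apply not_0_IZR; lia).
  replace (Q2R x) with (Q2R x / IZR D * IZR D) by (field; auto).
  rewrite Hu. field. apply not_0_IZR; lia.
Qed.

Lemma Q2R_pow2 (D A : Z) : Q2R (inject_Z (D ^ 2 * A)) = IZR D ^ 2 * IZR A.
Proof. rewrite Q2R_inject. replace (D ^ 2)%Z with (D * D)%Z by ring. rewrite !mult_IZR. ring. Qed.
Lemma Q2R_pow3 (D B : Z) : Q2R (inject_Z (D ^ 3 * B)) = IZR D ^ 3 * IZR B.
Proof. rewrite Q2R_inject. replace (D ^ 3)%Z with (D * D * D)%Z by ring. rewrite !mult_IZR. ring. Qed.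

Lemma step_bound (A B D : Z) (P : pt) :
  (4 * A ^ 3 + 27 * B ^ 2 <> 0)%Z -> (0 < D)%Z ->
  on_curve (inject_Z (D ^ 2 * A)) (inject_Z (D ^ 3 * B)) P ->
  Rabs (gpt D (dbl (inject_Z (D ^ 2 * A)) P) - 4 * gpt D P) <= Cst A B.
Proof.
  intros HDel HD HC.
  pose proof (Cst_parts A B) as (C1 & C2 & C3).
  assert (C0 : 0 <= Cst A B) by (unfold Cst; lra).
  destruct P as [[x y]|].
  2:{ simpl. replace (0 - 4 * 0) with 0 by ring. rewrite Rabs_R0. auto. }
  change (y*y == x*x*x + inject_Z (D^2*A) * x + inject_Z (D^3*B))%Q in HC.
  apply Qeq_eqR in HC. rewrite ?Q2R_plus, ?Q2R_mult in HC.
  rewrite Q2R_pow2, Q2R_pow3 in HC.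
  pose proof (u_repr x D HD) as HX.
  set (u := (x / inject_Z D)%Q) in *.
  set (m := Qnum (Qred u)) in *. set (n := Zpos (Qden (Qred u))) in *.
  assert (Hn : (0 < n)%Z) by (unfold n; lia).
  assert (Hc : Z.gcd m n = 1%Z) by apply Qred_coprime.
  assert (Hgu : gpt D (Some (x, y)) = ln (Rmax (IZR (Z.abs m)) (IZR n))) by reflexivity.
  rewrite Hgu.
  set (T := Rmax (IZR (Z.abs m)) (IZR n)).
  assert (T1 : 1 <= T) by (apply IZR_max_ge1; auto).
  assert (HDR : IZR D <> 0) by (apply not_0_IZR; lia).
  assert (HNR : IZR n <> 0) by (apply not_0_IZR; lia).
  unfold dbl. destruct (Qeq_bool y 0) eqn:E.
  - apply Qeq_bool_eq in E. apply Qeq_eqR in E. rewrite RMicromega.Q2R_0 in E.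
    rewrite E in HC.
    assert (HR := root_R A B (Q2R x) _ _ (IZR D) (IZR m) (IZR n) HDR HNR eq_refl eq_refl HX
       ltac:(lra)).
    assert (HZ : (m*m*m + A*m*n*n + B*n*n*n = 0)%Z).
    { apply eq_IZR. repeat rewrite ?plus_IZR, ?mult_IZR. lra. }
    destruct (root_Z A B m n Hn Hc HZ) as [Hn1 Hm].
    simpl gpt.
    assert (TU : T <= IZR (1 + Z.abs A + Z.abs B)).
    { unfold T. rewrite Hn1. apply Rmax_lub; apply IZR_le; lia. }
    assert (0 <= ln T) by (rewrite <- ln_1; apply ln_le; lra).
    assert (ln T <= ln (IZR (1 + Z.abs A + Z.abs B))) by (apply ln_le; lra).
    rewrite Rabs_left1 by lra. unfold Cst. lra.
  - apply Qeq_bool_neq in E.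
    assert (HY : Q2R y <> 0). { intro H. apply E. apply eqR_Qeq. rewrite RMicromega.Q2R_0. auto. }
    assert (E2 : ~ (2 # 1) * y == 0).
    { intro H. apply E. apply Qeq_eqR in H. apply eqR_Qeq. rewrite Q2R_mult, Q2R_21 in H.
      rewrite RMicromega.Q2R_0 in *. lra. }
    destruct (xdbl_R A B (Q2R x) (Q2R y) _ _ (IZR D) (IZR m) (IZR n) HDR HNR HY eq_refl eq_refl HX HC)
      as [Hx' HG].
    set (l := (((3 # 1) * x * x + inject_Z (D ^ 2 * A)) / ((2 # 1) * y))%Q).
    set (x' := (l * l - (2 # 1) * x)%Q).
    assert (Hl : Q2R l = (3 * Q2R x * Q2R x + IZR D ^ 2 * IZR A) / (2 * Q2R y)).
    { unfold l. rewrite Q2R_div by auto. rewrite ?Q2R_plus, ?Q2R_mult, Q2R_31, Q2R_21, Q2R_pow2.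
      reflexivity. }
    assert (Hx'R : Q2R (x' / inject_Z D) = IZR (FZ A B m n) / IZR (GZ A B m n)).
    { rewrite Q2R_div by (apply inject_ne0; auto). rewrite Q2R_inject.
      unfold x'. rewrite Q2R_minus, !Q2R_mult, Q2R_21, Hl. rewrite IZR_FZ, IZR_GZ. exact Hx'. }
    assert (HGZ : GZ A B m n <> 0%Z) by (intro Z0; apply HG; rewrite <- IZR_GZ, Z0; reflexivity).
    change (gpt D (Some (x', (l * (x - x') - y)%Q))) with (heightQ (x' / inject_Z D)).
    rewrite (heightQ_repr _ _ _ HGZ Hx'R).
    pose proof (dbl_height A B m n HDel Hn Hc HGZ) as Hb. simpl in Hb. fold T in Hb.
    apply Rabs_le. unfold Cst. lra.
Qed.

Theorem lemma3p3 (A B : Z) :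
  (4 * A ^ 3 + 27 * B ^ 2 <> 0)%Z ->
  exists c1 c2 : R,
    forall (D : Z), (0 < D)%Z -> squarefree D ->
    forall P : pt,
      on_curve (inject_Z (D ^ 2 * A)) (inject_Z (D ^ 3 * B)) P ->
      P <> None ->
      let d := canon_height (inject_Z (D ^ 2 * A)) P - hpt P in
      (c1 - ln (IZR D) <= d <= c2 + ln (IZR D)) /\
      (x_coord_gt P D -> c1 - ln (IZR D) <= d <= c2).
Proof.
  intros HDel.
  exists (- (Cst A B / 3)), (Cst A B / 3).
  intros D HD _ P HC HP d.
  set (a := inject_Z (D ^ 2 * A)) in *.
  set (b := inject_Z (D ^ 3 * B)) in *.
  assert (Hon : forall k, on_curve a b (Nat.iter k (dbl a) P)).
  { induction k; simpl; auto. apply dbl_on_curve; auto. }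
  set (h := fun k => hpt (Nat.iter k (dbl a) P)).
  set (g := fun k => gpt D (Nat.iter k (dbl a) P)).
  assert (Hg : forall k, Rabs (g (S k) - 4 * g k) <= Cst A B).
  { intro k. unfold g. simpl Nat.iter. apply step_bound; auto. }
  assert (Hh : forall k, Rabs (h k - g k) <= ln (IZR D)).
  { intro k. unfold h, g. destruct (Nat.iter k (dbl a) P) as [[x y]|].
    - simpl. destruct (scale_bound x D HD) as [H1 _]. apply Rabs_le. lra.
    - simpl. replace (0 - 0) with 0 by ring. rewrite Rabs_R0.
      rewrite <- ln_1. apply ln_le; [lra|]. apply IZR_le; lia. }
  destruct (tate h g _ _ Hg Hh) as [l [Hl Hb]].
  assert (Hcan : canon_height a P = l).
  { unfold canon_height. rewrite (is_lim_seq_unique (fun n => hpt (Nat.iter n (dbl a) P) / 4 ^ n) l Hl). reflexivity. }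
  unfold d. rewrite Hcan.
  destruct P as [[x y]|]; [|contradiction].
  unfold g in Hb. simpl in Hb.
  destruct (scale_bound x D HD) as [H1 H2].
  change (hpt (Some (x, y))) with (heightQ x).
  split.
  - lra.
  - intro Hx. specialize (H2 Hx). lra.
Qed.
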